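(* Let $f:(L_1,[\cdot,\cdot]_1,\alpha_1)\to(L_2,[\cdot,\cdot]_2,\alpha_2)$ be a surjective morphism of Hom-Lie algebras over a field $F$. If $\mu_A$ is a fuzzy Hom-Lie ideal of $L_1$, then the fuzzy set $\mu_{f(A)}$ on $L_2$, defined by $\mu_{f(A)}(y)=\sup_{x\in f^{-1}(y)}\mu_A(x)$ for $y\in f(L_1)$ and $\mu_{f(A)}(y)=0$ otherwise, is a fuzzy Hom-Lie ideal of $L_2$.
   Context: A Hom-Lie algebra over $F$ is a triple $(L,[\cdot,\cdot],\alpha)$ with $L$ an $F$-vector space, $\alpha:L\to L$ linear and $[\cdot,\cdot]$ bilinear, skew-symmetric, satisfying $[\alpha(x),[y,z]]+[\alpha(y),[z,x]]+[\alpha(z),[x,y]]=0$. A morphism of Hom-Lie algebras is a linear map $f$ with $f([x,y]_1)=[f(x),f(y)]_2$ and $f\circ\alpha_1=\alpha_2\circ f$. A fuzzy subset $\mu:L\to[0,1]$ is a fuzzy Hom-Lie ideal if for all $x,y\in L$, $c\in F$: $\mu(x+y)\ge\min\{\mu(x),\mu(y)\}$, $\mu(cx)\ge\mu(x)$, $\mu([x,y])\ge\max\{\mu(x),\mu(y)\}$, $\mu(\alpha(x))\ge\mu(x)$. *)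

(* Defs.v *)
From HB Require Import structures.
From mathcomp Require Import all_boot all_order all_algebra.
From mathcomp Require Import boolp classical_sets reals.
Set Implicit Arguments. Unset Strict Implicit. Unset Printing Implicit Defensive.
Import Order.TTheory GRing.Theory Num.Theory.
Local Open Scope ring_scope.
Local Open Scope classical_set_scope.

Definition is_hom_lie (F : fieldType) (L : lmodType F)
    (br : L -> L -> L) (alpha : L -> L) : Prop :=
  (forall (c : F) (x y : L), alpha (c *: x + y) = c *: alpha x + alpha y) /\
  (forall (c : F) (x y z : L), br (c *: x + y) z = c *: br x z + br y z) /\
  (forall (c : F) (x y z : L), br z (c *: x + y) = c *: br z x + br z y) /\
  (forall x y : L, br x y = - br y x) /\
  (forall x y z : L,
     br (alpha x) (br y z) + br (alpha y) (br z x) + br (alpha z) (br x y) = 0).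

Definition is_hom_lie_morphism (F : fieldType) (L1 L2 : lmodType F)
    (br1 : L1 -> L1 -> L1) (alpha1 : L1 -> L1)
    (br2 : L2 -> L2 -> L2) (alpha2 : L2 -> L2) (f : L1 -> L2) : Prop :=
  (forall (c : F) (x y : L1), f (c *: x + y) = c *: f x + f y) /\
  (forall x y : L1, f (br1 x y) = br2 (f x) (f y)) /\
  (forall x : L1, f (alpha1 x) = alpha2 (f x)).

Definition fuzzy_hom_lie_ideal (R : realType) (F : fieldType) (L : lmodType F)
    (br : L -> L -> L) (alpha : L -> L) (mu : L -> R) : Prop :=
  (forall x : L, 0 <= mu x <= 1) /\
  (forall x y : L, mu (x + y) >= Num.min (mu x) (mu y)) /\
  (forall (c : F) (x : L), mu (c *: x) >= mu x) /\
  (forall x y : L, mu (br x y) >= Num.max (mu x) (mu y)) /\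
  (forall x : L, mu (alpha x) >= mu x).

Definition fuzzy_image (R : realType) (F : fieldType) (L1 L2 : lmodType F)
    (f : L1 -> L2) (mu : L1 -> R) (y : L2) : R :=
  if `[< exists x : L1, f x = y >] then sup [set mu x | x in f @^-1` [set y]]
  else 0.

(* Main.v *)
Require Import Defs.
From HB Require Import structures.
From mathcomp Require Import all_boot all_order all_algebra.
From mathcomp Require Import boolp classical_sets reals.
Local Open Scope ring_scope.
Import Order.TTheory GRing.Theory Num.Theory.
Local Open Scope classical_set_scope.

Set Implicit Arguments.
Section Aux.
Variables (R : realType) (F : fieldType) (L1 L2 : lmodType F) (f : L1 -> L2) (mu : L1 -> R).
Hypothesis fsurj : forall y : L2, exists x : L1, f x = y.
Hypothesis mub : forall x : L1, 0 <= mu x <= 1.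

Lemma fibE y : fuzzy_image f mu y = sup [set mu x | x in f @^-1` [set y]].
Proof. by rewrite /fuzzy_image; case: asboolP => // -[]; apply: fsurj. Qed.

Lemma fib_ne y : [set mu x | x in f @^-1` [set y]] !=set0.
Proof. by have [a fa] := fsurj y; exists (mu a); exists a. Qed.

Lemma fib_hs y : has_sup [set mu x | x in f @^-1` [set y]].
Proof.
split; first exact: fib_ne.
by exists 1 => _ [a _ <-]; have /andP[] := mub a.
Qed.

Lemma le_fib a y : f a = y -> mu a <= fuzzy_image f mu y.
Proof. by move=> fa; rewrite fibE; apply: sup_upper_bound (fib_hs y) _ _; exists a. Qed.

Lemma fib_le y t : (forall a, f a = y -> mu a <= t) -> fuzzy_image f mu y <= t.
Proof. by move=> H; rewrite fibE; apply: ge_sup (fib_ne y) _ => _ [a fa <-]; apply: H. Qed.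

Lemma fib_gt y t : t < fuzzy_image f mu y -> exists a, f a = y /\ t < mu a.
Proof. by rewrite fibE => /(sup_gt (fib_ne y)) [_ [a fa <-] ?]; exists a. Qed.
End Aux.
Arguments le_fib {R F L1 L2 f mu} fsurj mub {a y}.
Arguments fib_le {R F L1 L2 f mu} fsurj {y t}.
Arguments fib_gt {R F L1 L2 f mu} fsurj {y t}.

Theorem theorem6p3 (R : realType) (F : fieldType) (L1 L2 : lmodType F)
    (br1 : L1 -> L1 -> L1) (alpha1 : L1 -> L1)
    (br2 : L2 -> L2 -> L2) (alpha2 : L2 -> L2) (f : L1 -> L2)
    (mu : L1 -> R) :
  is_hom_lie br1 alpha1 -> is_hom_lie br2 alpha2 ->
  is_hom_lie_morphism br1 alpha1 br2 alpha2 f ->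
  (forall y : L2, exists x : L1, f x = y) ->
  fuzzy_hom_lie_ideal br1 alpha1 mu ->
  fuzzy_hom_lie_ideal br2 alpha2 (fuzzy_image f mu).
Proof.
rewrite /is_hom_lie_morphism /fuzzy_hom_lie_ideal.
move=> _ _ [flin [fbr fal]] fs [mub [muD [muZ [mubr mual]]]].
have fD a b : f (a + b) = f a + f b by rewrite -[a]scale1r flin !scale1r.
have f0 : f 0 = 0.
  by apply: (addrI (f 0)); rewrite -fD !addr0.
have fZ c a : f (c *: a) = c *: f a by rewrite -[c *: a]addr0 flin f0 addr0.
split.
  move=> y; have [a fa] := fs y; apply/andP; split.
    by apply: (le_trans _ (le_fib fs mub fa)); have /andP[] := mub a.
  by apply: fib_le => // b _; have /andP[] := mub b.
split.
  move=> x y; rewrite leNgt; apply/negP => /[dup] H.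
  rewrite lt_min => /andP[/(fib_gt fs) [a [fa lta]] /(fib_gt fs) [b [fb ltb]]].
  have : fuzzy_image f mu (x + y) < Num.min (mu a) (mu b) by rewrite lt_min lta ltb.
  apply/negP; rewrite -leNgt; apply: le_trans (muD a b) _.
  by apply: le_fib => //; rewrite fD fa fb.
split.
  move=> c x; apply: fib_le => // a fa.
  by apply: le_trans (muZ c a) _; apply: le_fib => //; rewrite fZ fa.
split.
  move=> x y; rewrite ge_max; apply/andP; split.
    apply: fib_le => // a fa; have [b fb] := fs y.
    apply: le_trans (le_trans (_ : mu a <= Num.max (mu a) (mu b)) (mubr a b)) _.
    by rewrite le_max lexx.
    by apply: le_fib => //; rewrite fbr fa fb.
  apply: fib_le => // b fb; have [a fa] := fs x.
  apply: le_trans (le_trans (_ : mu b <= Num.max (mu a) (mu b)) (mubr a b)) _.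
  by rewrite le_max lexx orbT.
  by apply: le_fib => //; rewrite fbr fa fb.
move=> x; apply: fib_le => // a fa.
by apply: le_trans (mual a) _; apply: le_fib => //; rewrite fal fa.
Qed.
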